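(* For each $\theta\in\mathbb R$, the function $r\mapsto T(re^{i\theta})$ is strictly decreasing on $(0,1)$ and strictly increasing on $(1,\infty)$, its minimum over $r\in(0,\infty)$ is attained at $r=1$, $\lim_{r\to0}T(re^{i\theta})=\lim_{r\to\infty}T(re^{i\theta})=\infty$, and $T(re^{i\theta})=T(r^{-1}e^{i\theta})$ for all $r>0$.
   Context: Let $\mu$ be a Borel probability measure on $\mathbb T$. For $r\in(0,\infty)\setminus\{1\}$ and $\theta\in\mathbb R$ let $f(r,\theta)=\frac12\frac{1-r^2}{-\log r}\int_{-\pi}^{\pi}\frac{d\mu(e^{ix})}{|1-re^{i(\theta-x)}|^2}$, and let $f(1^-,\theta)=\lim_{r\to1^-}f(r,\theta)=\int_{-\pi}^{\pi}\frac{d\mu(e^{ix})}{|1-e^{i(\theta-x)}|^2}\in(0,\infty]$. Define $T(re^{i\theta})=1/f(r,\theta)$ for $r\neq1$ and $T(e^{i\theta})=1/f(1^-,\theta)$ (with $1/\infty=0$). *)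

(* Defs.v *)
From Stdlib Require Import Reals Lra ClassicalEpsilon.
Open Scope R_scope.

(* Continuous 2*PI-periodic functions R -> R, i.e. continuous functions on the
   circle T, written g(e^{ix}) = g x. *)
Definition periodic_cont (g : R -> R) : Prop :=
  (forall x, continuity_pt g x) /\ (forall x, g (x + 2 * PI) = g x).

(* A Borel probability measure mu on T, represented (Riesz-Markov) by its
   integration functional  L g = \int g(e^{ix}) dmu(e^{ix}) : a positive,
   normalized linear functional on C(T). *)
Definition is_circle_prob (L : (R -> R) -> R) : Prop :=
  (forall g h, periodic_cont g -> periodic_cont h ->
      L (fun x => g x + h x) = L g + L h) /\
  (forall c g, periodic_cont g -> L (fun x => c * g x) = c * L g) /\
  (forall g, periodic_cont g -> (forall x, 0 <= g x) -> 0 <= L g) /\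
  L (fun _ => 1) = 1.

(* |1 - r e^{it}|^2 written out *)
Definition absq_1_minus (r t : R) : R :=
  (1 - r * cos t) ^ 2 + (r * sin t) ^ 2.

(* f(r,theta) for r in (0,oo) \ {1} *)
Definition f (L : (R -> R) -> R) (r theta : R) : R :=
  / 2 * ((1 - r ^ 2) / (- ln r)) *
  L (fun x => / absq_1_minus r (theta - x)).

Definition lim_left1 (F : R -> R) (l : R) : Prop :=
  forall eps, 0 < eps -> exists delta, 0 < delta /\
    forall r, 1 - delta < r < 1 -> Rabs (F r - l) < eps.

(* T(e^{i theta}) = 1 / f(1^-, theta), with 1/oo = 0: if f(r,theta) has a finite
   limit l as r -> 1^-, the value is 1/l; otherwise (limit +oo) it is 0. *)
Definition T1 (L : (R -> R) -> R) (theta : R) : R :=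
  match excluded_middle_informative
          (exists l, lim_left1 (fun r => f L r theta) l) with
  | left H => / proj1_sig (constructive_indefinite_description _ H)
  | right _ => 0
  end.

Definition T (L : (R -> R) -> R) (r theta : R) : R :=
  if Req_EM_T r 1 then T1 L theta else / f L r theta.

(* Main.v *)
Require Import Defs.
From Stdlib Require Import Reals Lra FunctionalExtensionality ClassicalEpsilon.
Open Scope R_scope.

Lemma absq_eq r t : absq_1_minus r t = 1 - 2 * r * cos t + r ^ 2.
Proof. unfold absq_1_minus. pose proof (sin2_cos2 t). unfold Rsqr in H. nra. Qed.

Lemma absq_bounds r t : 0 < r -> (1 - r)^2 <= absq_1_minus r t <= (1 + r)^2.
Proof. intros. rewrite absq_eq. pose proof (COS_bound t). nra. Qed.

Lemma absq_pos r t : 0 < r -> r <> 1 -> 0 < absq_1_minus r t.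
Proof. intros. pose proof (absq_bounds r t H). assert (0 < (1-r)^2).
  { assert (1 - r <> 0) by lra. nra. } lra. Qed.

Definition P r theta := fun x => / absq_1_minus r (theta - x).

Lemma periodic_P r theta : 0 < r -> r <> 1 -> periodic_cont (P r theta).
Proof.
intros H0 H1. split.
- intros x. unfold P. apply continuity_pt_inv.
  + unfold absq_1_minus. reg.
  + apply Rgt_not_eq, absq_pos; auto.
- intros x. unfold P. rewrite !absq_eq.
  replace (cos (theta - (x + 2 * PI))) with (cos (theta - x)); [reflexivity|].
  rewrite <- (cos_period (theta - (x + 2*PI)) 1). f_equal. simpl. ring.
Qed.

Section LP.
Variable L : (R -> R) -> R.
Hypothesis hL : is_circle_prob L.

Lemma per_const c : periodic_cont (fun _ => c).
Proof. split. intros; apply continuity_pt_const; intros ? ?; reflexivity. reflexivity. Qed.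

Lemma L_const c : L (fun _ => c) = c.
Proof. destruct hL as [_ [Hs [_ H1]]].
  replace (fun _ : R => c) with (fun x : R => c * (fun _ => 1) x).
  rewrite Hs. rewrite H1; ring. apply per_const.
  apply functional_extensionality; intros; simpl; ring. Qed.

Lemma L_mono g h : periodic_cont g -> periodic_cont h -> (forall x, g x <= h x) -> L g <= L h.
Proof. intros Hg Hh Hle. destruct hL as [Ha [Hs [Hp H1]]].
  assert (Pd : periodic_cont (fun x => h x - g x)).
  { destruct Hg as [Hg1 Hg2]; destruct Hh as [Hh1 Hh2]. split.
    intros x. apply continuity_pt_minus; auto. intros x. rewrite Hg2, Hh2. reflexivity. }
  replace h with (fun x => g x + (h x - g x)).
  rewrite Ha; auto. assert (0 <= L (fun x => h x - g x)). apply Hp; auto. intros x; specialize (Hle x); lra. lra.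
  apply functional_extensionality; intros; ring. Qed.

Lemma L_scal c g : periodic_cont g -> L (fun x => c * g x) = c * L g.
Proof. destruct hL as [_ [Hs _]]. auto. Qed.

Lemma L_lb c g : periodic_cont g -> (forall x, c <= g x) -> c <= L g.
Proof. intros. rewrite <- (L_const c). apply L_mono; auto. apply per_const. Qed.
Lemma L_ub c g : periodic_cont g -> (forall x, g x <= c) -> L g <= c.
Proof. intros. rewrite <- (L_const c). apply L_mono; auto. apply per_const. Qed.

Lemma per_scal c g : periodic_cont g -> periodic_cont (fun x => c * g x).
Proof. intros [H1 H2]. split. intros; apply continuity_pt_scal; auto. intros; rewrite H2; auto. Qed.

Lemma LP_lb r theta : 0 < r -> r <> 1 -> / (1 + r)^2 <= L (P r theta).
Proof. intros. apply L_lb. apply periodic_P; auto. intros x. unfold P.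
  apply Rinv_le_contravar. apply absq_pos; auto. apply absq_bounds; auto. Qed.

Lemma LP_pos r theta : 0 < r -> r <> 1 -> 0 < L (P r theta).
Proof. intros. eapply Rlt_le_trans; [|apply LP_lb; auto]. apply Rinv_0_lt_compat. nra. Qed.

End LP.
From Coquelicot Require Coquelicot.
Module Calc. Import Coquelicot.Coquelicot.
Lemma lnA r : 0 < r < 1 -> (r - / r) / 2 < ln r.
Proof.
intros [H0 H1].
set (u := fun x => ln x - (x - / x) / 2).
destruct (MVT_cor2 u (fun c => - (c - 1)^2 / (2 * c^2)) r 1 H1) as [c [Hc1 Hc2]].
{ intros c Hc. apply is_derive_Reals. unfold u. auto_derive. lra. field. lra. }
unfold u in Hc1. rewrite ln_1 in Hc1.
assert (0 < (c-1)^2 / (2*c^2)). { apply Rdiv_lt_0_compat. nra. nra. }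
assert (- (c - 1)^2 / (2 * c^2) = - ((c - 1)^2 / (2 * c^2))) by (field; lra).
rewrite H2 in Hc1.
assert (0 - (1 - / 1) / 2 - (ln r - (r - / r) / 2) < 0) by nra.
assert (/1 = 1) by field. lra.
Qed.

Definition hh r := - ln r * ((1 + r) / (1 - r)).
Lemma hh_decr r1 r2 : 0 < r1 < r2 -> r2 < 1 -> hh r2 < hh r1.
Proof.
intros [H0 H1] H2.
destruct (MVT_cor2 hh (fun c => - (/c) * ((1+c)/(1-c)) - ln c * (2 / (1-c)^2)) r1 r2 H1) as [c [Hc1 Hc2]].
{ intros c Hc. apply is_derive_Reals. unfold hh. auto_derive. split. lra. split. lra. auto.
  field. lra. }
assert (Hl := lnA c ltac:(lra)).
assert (Hd : - (/c) * ((1+c)/(1-c)) - ln c * (2 / (1-c)^2) < 0).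
{ assert (E : - (/c) * ((1+c)/(1-c)) - ln c * (2 / (1-c)^2)
      = 2 / (1-c)^2 * ((c - /c)/2 - ln c)) by (field; lra).
  rewrite E. assert (0 < 2 / (1-c)^2). { apply Rdiv_lt_0_compat. lra. nra. }
  nra. }
nra.
Qed.
End Calc. Import Calc.
Definition B r := (1 - r^2) / (- ln r).
Lemma lnneg r : 0 < r < 1 -> ln r < 0.
Proof. intros. rewrite <- ln_1. apply ln_increasing; lra. Qed.
Lemma lnpos r : 1 < r -> 0 < ln r.
Proof. intros. rewrite <- ln_1. apply ln_increasing; lra. Qed.

Lemma B_pos r : 0 < r -> r <> 1 -> 0 < B r.
Proof. intros. unfold B. destruct (Rlt_or_le r 1).
  - apply Rdiv_lt_0_compat. nra. pose proof (lnneg r). lra.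
  - assert (1 < r) by lra. pose proof (lnpos r H2).
    replace ((1 - r^2) / - ln r) with ((r^2 - 1) / ln r) by (field; lra).
    apply Rdiv_lt_0_compat; nra. Qed.

Lemma hh_pos r : 0 < r < 1 -> 0 < hh r.
Proof. intros. unfold hh. pose proof (lnneg r H). apply Rmult_lt_0_compat. lra.
  apply Rdiv_lt_0_compat; lra. Qed.

Lemma B_hh r : 0 < r < 1 -> B r = (1 + r)^2 / hh r.
Proof. intros. unfold B, hh. pose proof (lnneg r H). field. lra. Qed.

Section F.
Variable L : (R -> R) -> R.
Hypothesis hL : is_circle_prob L.
Variable theta : R.

Lemma f_eq r : Defs.f L r theta = / 2 * B r * L (P r theta).
Proof. reflexivity. Qed.

Lemma f_pos r : 0 < r -> r <> 1 -> 0 < Defs.f L r theta.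
Proof. intros. rewrite f_eq. pose proof (B_pos r H H0). pose proof (LP_pos L hL r theta H H0).
  apply Rmult_lt_0_compat; [apply Rmult_lt_0_compat|]; lra. Qed.

Lemma f_sym r : 0 < r -> Defs.f L (/ r) theta = Defs.f L r theta.
Proof. intros. destruct (Req_dec r 1) as [->|Hr]. rewrite Rinv_1; reflexivity.
  rewrite !f_eq.
  replace (P (/ r) theta) with (fun x => r^2 * P r theta x).
  rewrite L_scal; auto. 2: apply periodic_P; auto.
  unfold B. rewrite ln_Rinv; auto. pose proof (ln_neq_0 r Hr H). field. lra.
  apply functional_extensionality. intros x. unfold P. rewrite !absq_eq.
  pose proof (absq_pos r (theta - x) H Hr). rewrite absq_eq in H0. field. split; lra.
Qed.

Lemma f_incr r1 r2 : 0 < r1 < r2 -> r2 < 1 -> Defs.f L r1 theta < Defs.f L r2 theta.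
Proof. intros [H0 H1] H2.
  set (c := (1 + r1)^2 / (1 + r2)^2).
  assert (Hc : c * L (P r1 theta) <= L (P r2 theta)).
  { rewrite <- L_scal; auto. 2: apply periodic_P; lra.
    apply L_mono; auto. apply per_scal, periodic_P; lra. apply periodic_P; lra.
    intros x. unfold P, c. pose proof (absq_pos r1 (theta - x) H0 ltac:(lra)).
    pose proof (absq_pos r2 (theta - x) ltac:(lra) ltac:(lra)).
    rewrite !absq_eq in *. pose proof (COS_bound (theta - x)).
    set (k := cos (theta - x)) in *.
    cbv beta. rewrite <- (Rmult_1_r (/ (1 - 2 * r2 * k + r2^2))).
    replace ((1 + r1)^2 / (1 + r2)^2 * / (1 - 2 * r1 * k + r1^2)) with
      (/ (1 - 2 * r2 * k + r2^2) * ((1 + r1)^2 * (1 - 2 * r2 * k + r2^2) / ((1 + r2)^2 * (1 - 2 * r1 * k + r1^2)))) by (field; lra).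
    apply Rmult_le_compat_l. left; apply Rinv_0_lt_compat; lra.
    apply Rmult_le_reg_r with ((1 + r2)^2 * (1 - 2 * r1 * k + r1^2)). nra.
    unfold Rdiv. rewrite Rmult_assoc, Rinv_l by nra.
    assert (0 <= (k+1)*(r2-r1)*(1-r1*r2)). { apply Rmult_le_pos. apply Rmult_le_pos; lra. nra. }
    nra. }
  rewrite !f_eq.
  pose proof (LP_pos L hL r1 theta H0 ltac:(lra)).
  pose proof (hh_decr r1 r2 ltac:(lra) H2).
  pose proof (hh_pos r1 ltac:(lra)). pose proof (hh_pos r2 ltac:(lra)).
  rewrite !B_hh by lra.
  apply Rlt_le_trans with (/2 * ((1 + r2)^2 / hh r2) * (c * L (P r1 theta))).
  2: { apply Rmult_le_compat_l; auto. apply Rmult_le_pos. lra. left; apply Rdiv_lt_0_compat; nra. }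
  unfold c. replace (/ 2 * ((1 + r2) ^ 2 / hh r2) * ((1 + r1) ^ 2 / (1 + r2) ^ 2 * L (P r1 theta)))
    with (/2 * (1+r1)^2 * L (P r1 theta) * / hh r2) by (field; split; nra).
  replace (/ 2 * ((1 + r1) ^ 2 / hh r1) * L (P r1 theta))
    with (/2 * (1+r1)^2 * L (P r1 theta) * / hh r1) by (field; lra).
  apply Rmult_lt_compat_l. apply Rmult_lt_0_compat; [|lra]. apply Rmult_lt_0_compat; nra.
  apply Rinv_lt_contravar; nra.
Qed.

Lemma f_small r : 0 < r <= / 2 -> Defs.f L r theta <= 2 / (- ln r).
Proof. intros H. rewrite f_eq. pose proof (lnneg r ltac:(lra)).
  assert (L (P r theta) <= 4).
  { apply L_ub; auto. apply periodic_P; lra. intros x. unfold P.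
    pose proof (absq_bounds r (theta - x) ltac:(lra)).
    replace 4 with (/ (/ 4)) by field. apply Rinv_le_contravar. lra. nra. }
  pose proof (LP_pos L hL r theta ltac:(lra) ltac:(lra)).
  unfold B. apply Rle_trans with (/2 * ((1 - r^2) / - ln r) * 4).
  apply Rmult_le_compat_l; auto. apply Rmult_le_pos. lra. left; apply Rdiv_lt_0_compat; nra.
  replace (/ 2 * ((1 - r ^ 2) / - ln r) * 4) with (2 * (1 - r^2) / - ln r) by (field; lra).
  unfold Rdiv. apply Rmult_le_compat_r. left; apply Rinv_0_lt_compat; lra. nra.
Qed.
End F.

Section TT.
Variable L : (R -> R) -> R.
Hypothesis hL : is_circle_prob L.
Variable theta : R.

Lemma T_ne r : r <> 1 -> T L r theta = / Defs.f L r theta.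
Proof. intros. unfold T. destruct (Req_EM_T r 1); [contradiction|reflexivity]. Qed.

Lemma T_pos r : 0 < r -> r <> 1 -> 0 < T L r theta.
Proof. intros. rewrite T_ne; auto. apply Rinv_0_lt_compat, f_pos; auto. Qed.

Lemma T_sym r : 0 < r -> T L r theta = T L (/ r) theta.
Proof. intros. destruct (Req_dec r 1) as [->|Hr]. rewrite Rinv_1; reflexivity.
  assert (/ r <> 1). { intro E. apply Hr. rewrite <- (Rinv_inv r), E. apply Rinv_1. }
  rewrite !T_ne; auto. rewrite f_sym; auto. Qed.

Lemma T_decr r1 r2 : 0 < r1 < r2 -> r2 < 1 -> T L r2 theta < T L r1 theta.
Proof. intros. rewrite !T_ne by lra. pose proof (f_incr L hL theta r1 r2 H H0).
  pose proof (f_pos L hL theta r1 ltac:(lra) ltac:(lra)).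
  apply Rinv_lt_contravar; nra. Qed.

Lemma T_min01 r : 0 < r < 1 -> T L 1 theta <= T L r theta.
Proof. intros Hr. unfold T at 1. destruct (Req_EM_T 1 1) as [_|n]; [|congruence].
  unfold T1. destruct (excluded_middle_informative _) as [H|H].
  - destruct (constructive_indefinite_description _ H) as [l Hl]. simpl.
    assert (Cl : forall r0, 0 < r0 < 1 -> Defs.f L r0 theta <= l).
    { intros r0 H0. apply Rnot_lt_le. intro Hlt.
      destruct (Hl (Defs.f L r0 theta - l) ltac:(lra)) as [d [Hd Hd2]].
      destruct (Rlt_le_dec (1 - d) r0).
      - specialize (Hd2 r0 ltac:(lra)). pose proof (Rle_abs (Defs.f L r0 theta - l)). lra.
      - specialize (Hd2 (1 - d/2) ltac:(lra)).
        pose proof (Rle_abs (Defs.f L (1 - d/2) theta - l)).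
        pose proof (f_incr L hL theta r0 (1 - d/2) ltac:(lra) ltac:(lra)). lra. }
    rewrite T_ne by lra. apply Rinv_le_contravar. apply (f_pos L hL theta); lra. apply Cl; auto.
  - left. apply T_pos; lra.
Qed.

End TT.

Theorem lemma4p3 (L : (R -> R) -> R) (hL : is_circle_prob L) (theta : R) :
  (forall r1 r2, 0 < r1 < r2 -> r2 < 1 -> T L r2 theta < T L r1 theta) /\
  (forall r1 r2, 1 < r1 < r2 -> T L r1 theta < T L r2 theta) /\
  (forall r, 0 < r -> T L 1 theta <= T L r theta) /\
  (forall M, exists delta, 0 < delta /\
     forall r, 0 < r < delta -> M < T L r theta) /\
  (forall M, exists K, 0 < K /\ forall r, K < r -> M < T L r theta) /\
  (forall r, 0 < r -> T L r theta = T L (/ r) theta).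
Proof.
  assert (Small : forall M, exists delta, 0 < delta /\
     forall r, 0 < r < delta -> M < T L r theta).
  { intros M. exists (Rmin (/2) (exp (-(2 * Rabs M)))). split.
    apply Rmin_glb_lt. lra. apply exp_pos.
    intros r [H0 H1]. pose proof (Rmin_l (/2) (exp (-(2 * Rabs M)))).
    pose proof (Rmin_r (/2) (exp (-(2 * Rabs M)))).
    assert (Hln : ln r < - (2 * Rabs M)).
    { rewrite <- (ln_exp (- (2 * Rabs M))). apply ln_increasing; lra. }
    pose proof (lnneg r ltac:(lra)).
    rewrite T_ne by lra.
    pose proof (f_small L hL theta r ltac:(lra)).
    pose proof (f_pos L hL theta r ltac:(lra) ltac:(lra)).
    apply Rlt_le_trans with (/ (2 / - ln r)).
    replace (/ (2 / - ln r)) with (- ln r / 2) by (field; lra).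
    pose proof (Rle_abs M). lra.
    apply Rinv_le_contravar; auto. }
  split; [|split; [|split; [|split; [|split]]]].
  - intros. apply T_decr; auto.
  - intros r1 r2 H. rewrite (T_sym L hL theta r1), (T_sym L hL theta r2) by lra.
    apply T_decr; auto. split. apply Rinv_0_lt_compat; lra. apply Rinv_lt_contravar; nra.
    rewrite <- Rinv_1. apply Rinv_lt_contravar; lra.
  - intros r Hr. destruct (Rlt_or_le r 1). apply T_min01; auto; lra.
    destruct (Req_dec r 1) as [->|Hn]. lra.
    rewrite (T_sym L hL theta r) by lra. apply T_min01; auto. split.
    apply Rinv_0_lt_compat; lra. rewrite <- Rinv_1. apply Rinv_lt_contravar; lra.
  - exact Small.
  - intros M. destruct (Small M) as [d [Hd Hd2]]. exists (/ d). split.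
    apply Rinv_0_lt_compat; auto. intros r Hr.
    assert (0 < r). { pose proof (Rinv_0_lt_compat d Hd). lra. }
    rewrite (T_sym L hL theta r) by lra. apply Hd2. split. apply Rinv_0_lt_compat; auto.
    rewrite <- (Rinv_inv d). apply Rinv_lt_contravar; auto. apply Rmult_lt_0_compat; auto.
    apply Rinv_0_lt_compat; auto.
  - intros. apply T_sym; auto.
Qed.
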